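(* Let $J_1,J_2\in\mathbb{R}$, $\beta>0$, $a=e^{J_1\beta}$, $b=e^{J_2\beta}$, and let $F$ and $M_1$ be as below. 1) If $J_2>0$, then for every integer $p\ge2$ the equation $F^p(u)=u$ has no solution $u\in M_1\setminus \mathrm{Fix}(F)$. 2) If $J_2<0$, then for every integer $p\ge3$ the equation $F^p(u)=u$ has no solution $u\in M_1\setminus(\mathrm{Fix}(F)\cup\mathrm{Per}_2(F))$.
   Context: $F:\mathbb{R}^4_+\to\mathbb{R}^4_+$ (positive coordinates) is $F(u)=(u_1',u_2',u_3',u_4')$ with $u_1'=a(bu_1+b^{-1}u_2)^2$, $u_2'=a^{-1}(bu_3+b^{-1}u_4)^2$, $u_3'=a^{-1}(b^{-1}u_1+bu_2)^2$, $u_4'=a(b^{-1}u_3+bu_4)^2$. $M_1=\{u\in\mathbb{R}^4_+:\ u_1=u_4,\ u_2=u_3\}$. $F^p$ is the $p$-th iterate, $\mathrm{Fix}(F)=\{u:F(u)=u\}$, and $\mathrm{Per}_2(F)$ is the set of points of prime (least) period $2$ of $F$. *)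

(* Defs.v *)
From Stdlib Require Import Reals.
Open Scope R_scope.

Record R4 : Type := mkR4 { c1 : R; c2 : R; c3 : R; c4 : R }.

Definition pos4 (u : R4) : Prop := 0 < c1 u /\ 0 < c2 u /\ 0 < c3 u /\ 0 < c4 u.

Definition F (a b : R) (u : R4) : R4 :=
  mkR4 (a * (b * c1 u + / b * c2 u) ^ 2)
       (/ a * (b * c3 u + / b * c4 u) ^ 2)
       (/ a * (/ b * c1 u + b * c2 u) ^ 2)
       (a * (/ b * c3 u + b * c4 u) ^ 2).

Fixpoint Fiter (a b : R) (p : nat) (u : R4) : R4 :=
  match p with
  | O => u
  | S q => F a b (Fiter a b q u)
  end.

Definition M1 (u : R4) : Prop := pos4 u /\ c1 u = c4 u /\ c2 u = c3 u.

Definition isFix (a b : R) (u : R4) : Prop := F a b u = u.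

Definition isPer2 (a b : R) (u : R4) : Prop :=
  Fiter a b 2 u = u /\ F a b u <> u.

(* Main.v *)
Require Import Defs.
From Stdlib Require Import Reals Lra Lia Psatz.
Open Scope R_scope.

Lemma div_lt (x y c e : R) : 0 < c -> 0 < e -> x * e < y * c -> x / c < y / e.
Proof.
  intros Hc He H.
  assert (E : x / c - y / e = (x * e - y * c) * (/ c * / e)) by (field; lra).
  assert (0 < / c * / e) by (apply Rmult_lt_0_compat; apply Rinv_0_lt_compat; lra).
  assert ((x * e - y * c) * (/ c * / e) < 0).
  { nra. }
  lra.
Qed.

Lemma seq_per (P : R -> Prop) (phi : R -> R) (s : nat -> R) :
  (forall n, P (s n)) -> (forall n, s (S n) = phi (s n)) ->
  (forall y z, P y -> P z -> y < z -> phi y < phi z) ->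
  forall p, (1 <= p)%nat -> s p = s 0%nat -> s 1%nat = s 0%nat.
Proof.
  intros HP Hs Hm p Hp Hper.
  destruct (Rtotal_order (s 1%nat) (s 0%nat)) as [Hlt|[Heq|Hgt]]; [|exact Heq|].
  - assert (A : forall n, s (S n) < s n).
    { induction n; [exact Hlt|]. pose proof (Hm _ _ (HP _) (HP _) IHn) as K. rewrite <- !Hs in K. exact K. }
    assert (B : forall n, s (S n) < s 0%nat).
    { induction n; [exact Hlt|]. specialize (A (S n)). lra. }
    destruct p; [lia|]. specialize (B p). lra.
  - assert (A : forall n, s n < s (S n)).
    { induction n; [exact Hgt|]. pose proof (Hm _ _ (HP _) (HP _) IHn) as K. rewrite <- !Hs in K. exact K. }
    assert (B : forall n, s 0%nat < s (S n)).
    { induction n; [exact Hgt|]. specialize (A (S n)). lra. }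
    destruct p; [lia|]. specialize (B p). lra.
Qed.

Definition gf (b r : R) := (b * r + / b) / (r / b + b).
Definition hf (a b r : R) := a ^ 2 * (gf b r) ^ 2.

Lemma gf_pos b r : 0 < b -> 0 < r -> 0 < gf b r.
Proof.
  intros Hb Hr. unfold gf. assert (0 < / b) by (apply Rinv_0_lt_compat; lra).
  apply Rdiv_lt_0_compat; [nra|]. unfold Rdiv. nra.
Qed.

Lemma gf_cmp b r1 r2 : 0 < b -> 0 < r1 -> 0 < r2 -> r1 < r2 ->
  (1 < b -> gf b r1 < gf b r2) /\ (b < 1 -> gf b r2 < gf b r1).
Proof.
  intros Hb H1 H2 H12. unfold gf.
  assert (Ib : 0 < / b) by (apply Rinv_0_lt_compat; lra).
  assert (Q : forall r, 0 < r -> 0 < r / b + b) by (intros; unfold Rdiv; nra).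
  assert (D : (b * r1 + / b) * (r2 / b + b) - (b * r2 + / b) * (r1 / b + b)
              = (b * b - / b * / b) * (r1 - r2)) by (field; lra).
  split; intro Hb1; apply div_lt; auto.
  - assert (b * / b = 1) by (field; lra).
    assert (/ b < 1).
    { assert (/ b * b = 1) by (field; lra). nra. }
    assert (0 < b * b - / b * / b) by nra. nra.
  - assert (b * / b = 1) by (field; lra).
    assert (1 < / b).
    { assert (/ b * b = 1) by (field; lra). nra. }
    assert (b * b - / b * / b < 0) by nra. nra.
Qed.

Lemma hf_cmp a b r1 r2 : 0 < a -> 0 < b -> 0 < r1 -> 0 < r2 -> r1 < r2 ->
  (1 < b -> hf a b r1 < hf a b r2) /\ (b < 1 -> hf a b r2 < hf a b r1).
Proof.
  intros Ha Hb H1 H2 H12. destruct (gf_cmp b r1 r2 Hb H1 H2 H12) as [A B].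
  pose proof (gf_pos b r1 Hb H1). pose proof (gf_pos b r2 Hb H2).
  unfold hf. assert (0 < a^2) by (simpl; nra).
  split; intro Hb1.
  - specialize (A Hb1). apply Rmult_lt_compat_l; auto. simpl; nra.
  - specialize (B Hb1). apply Rmult_lt_compat_l; auto. simpl; nra.
Qed.

Lemma hf_pos a b r : 0 < a -> 0 < b -> 0 < r -> 0 < hf a b r.
Proof. intros. pose proof (gf_pos b r H0 H1). unfold hf. apply Rmult_lt_0_compat; apply pow_lt; auto. Qed.

Lemma M1_F a b v : 0 < a -> 0 < b -> M1 v -> M1 (F a b v).
Proof.
  intros Ha Hb [[h1 [h2 [h3 h4]]] [e1 e2]]. destruct v as [x y z w]; simpl in *.
  subst. assert (0 < / a) by (apply Rinv_0_lt_compat; lra).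
  assert (0 < / b) by (apply Rinv_0_lt_compat; lra).
  unfold M1, pos4, F; simpl. repeat split.
  - apply Rmult_lt_0_compat; auto; rewrite Rmult_1_r; apply Rmult_lt_0_compat; nra.
  - apply Rmult_lt_0_compat; auto; rewrite Rmult_1_r; apply Rmult_lt_0_compat; nra.
  - apply Rmult_lt_0_compat; auto; rewrite Rmult_1_r; apply Rmult_lt_0_compat; nra.
  - apply Rmult_lt_0_compat; auto; rewrite Rmult_1_r; apply Rmult_lt_0_compat; nra.
  - ring.
  - ring.
Qed.

Lemma M1_iter a b n v : 0 < a -> 0 < b -> M1 v -> M1 (Fiter a b n v).
Proof. intros. induction n; simpl; auto. apply M1_F; auto. Qed.

Lemma Fiter_add a b m n v : Fiter a b (m + n) v = Fiter a b m (Fiter a b n v).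
Proof. induction m; simpl; congruence. Qed.

Lemma Fiter_mul a b p k v : Fiter a b p v = v -> Fiter a b (k * p) v = v.
Proof. intro H. induction k; simpl; auto. rewrite Fiter_add, IHk. exact H. Qed.

Lemma F_c1 a b v : 0 < a -> 0 < b -> M1 v ->
  Defs.c1 (F a b v) = a * (b + / b / (Defs.c1 v / Defs.c2 v)) ^ 2 * Defs.c1 v ^ 2.
Proof.
  intros Ha Hb [[h1 [h2 [h3 h4]]] [e1 e2]]. destruct v as [x y z w]; simpl in *.
  field. lra.
Qed.

Lemma F_ratio a b v : 0 < a -> 0 < b -> M1 v ->
  Defs.c1 (F a b v) / Defs.c2 (F a b v) = hf a b (Defs.c1 v / Defs.c2 v).
Proof.
  intros Ha Hb [[h1 [h2 [h3 h4]]] [e1 e2]]. destruct v as [x y z w]; simpl in *.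
  subst. unfold hf, gf. 
  assert (0 < / b) by (apply Rinv_0_lt_compat; lra).
  assert (0 < b * z + / b * w) by nra.
  assert (0 < w / z / b + b).
  { assert (0 < w / z / b) by (repeat apply Rdiv_lt_0_compat; lra). lra. }
  field. repeat split; try lra; nra.
Qed.

Lemma M1_eq v w : M1 v -> M1 w -> Defs.c1 v = Defs.c1 w -> Defs.c2 v = Defs.c2 w -> v = w.
Proof.
  intros [_ [e1 e2]] [_ [f1 f2]] E1 E2. destruct v, w; simpl in *. congruence.
Qed.

Lemma sq_mono K y z : 0 < K -> 0 < y -> y < z -> K * y ^ 2 < K * z ^ 2.
Proof. intros. apply Rmult_lt_compat_l; auto. simpl. nra. Qed.

Lemma K_pos a b r : 0 < a -> 0 < b -> 0 < r -> 0 < a * (b + / b / r) ^ 2.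
Proof.
  intros. apply Rmult_lt_0_compat; auto. apply pow_lt.
  assert (0 < / b / r) by (apply Rdiv_lt_0_compat; auto; apply Rinv_0_lt_compat; auto). lra.
Qed.

Section Core.
Variables (a b : R) (u : R4).
Hypotheses (Ha : 0 < a) (Hb : 0 < b) (Hu : M1 u).

Let X n := Defs.c1 (Fiter a b n u).
Let Y n := Defs.c2 (Fiter a b n u).
Let r n := X n / Y n.

Lemma Mn n : M1 (Fiter a b n u).
Proof. apply M1_iter; auto. Qed.

Lemma Xpos n : 0 < X n.
Proof. destruct (Mn n) as [[h _] _]. exact h. Qed.
Lemma Ypos n : 0 < Y n.
Proof. destruct (Mn n) as [[_ [h _]] _]. exact h. Qed.
Lemma rpos n : 0 < r n.
Proof. unfold r. apply Rdiv_lt_0_compat; [apply Xpos|apply Ypos]. Qed.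

Lemma r_step n : r (S n) = hf a b (r n).
Proof. unfold r, X, Y. simpl. apply F_ratio; auto. apply Mn. Qed.

Lemma X_step n : X (S n) = a * (b + / b / r n) ^ 2 * X n ^ 2.
Proof. unfold r, X, Y. simpl. apply F_c1; auto. apply Mn. Qed.

Lemma Y_of n : Y n = X n / r n.
Proof. unfold r. pose proof (Xpos n). pose proof (Ypos n). field. split; lra. Qed.

Lemma core_gt (Hb1 : 1 < b) p : (1 <= p)%nat -> Fiter a b p u = u -> F a b u = u.
Proof.
  intros Hp Hper.
  assert (R1 : r 1%nat = r 0%nat).
  { apply (seq_per (fun x => 0 < x) (hf a b) r rpos r_step) with (p := p); auto. all: try (intros y z Hy Hz Hyz; apply (hf_cmp a b y z); auto; lra). all: try (unfold r, X, Y; rewrite Hper; reflexivity). }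
  assert (Rc : forall n, r n = r 0%nat).
  { induction n; auto. rewrite r_step, IHn, <- r_step. exact R1. }
  assert (X1 : X 1%nat = X 0%nat).
  { apply (seq_per (fun x => 0 < x) (fun x => a * (b + / b / r 0%nat) ^ 2 * x ^ 2) X Xpos) with (p := p); auto.
    - intro n. rewrite X_step, Rc. reflexivity.
    - intros y z Hy Hz Hyz. apply sq_mono; auto. apply K_pos; auto. apply rpos.
    - unfold X. rewrite Hper. reflexivity. }
  assert (Y1 : Y 1%nat = Y 0%nat) by (rewrite !Y_of, X1, R1; reflexivity).
  change (Fiter a b 1 u = Fiter a b 0 u). apply M1_eq; try apply Mn; auto.
Qed.

Lemma core_lt (Hb1 : b < 1) p : (1 <= p)%nat -> Fiter a b p u = u -> Fiter a b 2 u = u.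
Proof.
  intros Hp Hper.
  assert (Hper2 : Fiter a b (2 * p) u = u) by (apply Fiter_mul; auto).
  assert (R2 : r 2%nat = r 0%nat).
  { apply (seq_per (fun x => 0 < x) (fun x => hf a b (hf a b x)) (fun n => r (2 * n)%nat)) with (p := p); auto.
    - intro n; apply rpos.
    - intro n. replace (2 * S n)%nat with (S (S (2 * n))) by lia. rewrite !r_step. reflexivity.
    - intros y z Hy Hz Hyz. apply (hf_cmp a b); try apply hf_pos; auto.
      apply (hf_cmp a b y z); auto.
    - simpl (2 * 0)%nat. unfold r, X, Y. rewrite Hper2. reflexivity. }
  assert (Rc : forall n, r (2 * n)%nat = r 0%nat /\ r (S (2 * n)) = r 1%nat).
  { induction n; [split; reflexivity|].
    replace (2 * S n)%nat with (S (S (2 * n))) by lia.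
    destruct IHn as [E0 E1].
    assert (A : r (S (S (2 * n))) = r 0%nat) by (rewrite !r_step, E0, <- !r_step; exact R2).
    split; auto. rewrite r_step, A, <- r_step. reflexivity. }
  set (K0 := a * (b + / b / r 0%nat) ^ 2).
  set (K1 := a * (b + / b / r 1%nat) ^ 2).
  assert (K0p : 0 < K0) by (apply K_pos; auto; apply rpos).
  assert (K1p : 0 < K1) by (apply K_pos; auto; apply rpos).
  assert (X2 : X 2%nat = X 0%nat).
  { apply (seq_per (fun x => 0 < x) (fun x => K1 * (K0 * x ^ 2) ^ 2) (fun n => X (2 * n)%nat)) with (p := p); auto.
    - intro n; apply Xpos.
    - intro n. replace (2 * S n)%nat with (S (S (2 * n))) by lia.
      destruct (Rc n) as [E0 E1].
      rewrite X_step, E1, X_step, E0. reflexivity.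
    - intros y z Hy Hz Hyz. apply sq_mono; auto.
      + apply Rmult_lt_0_compat; auto. apply pow_lt; auto.
      + apply sq_mono; auto.
    - simpl (2 * 0)%nat. unfold X. rewrite Hper2. reflexivity. }
  assert (Y2 : Y 2%nat = Y 0%nat) by (rewrite !Y_of, X2, R2; reflexivity).
  change (Fiter a b 2 u = Fiter a b 0 u). apply M1_eq; try apply Mn; auto.
Qed.
End Core.

Theorem lemma5 (J1 J2 beta : R) (hbeta : 0 < beta) :
  let a := exp (J1 * beta) in
  let b := exp (J2 * beta) in
  (0 < J2 ->
     forall (p : nat), (2 <= p)%nat ->
     ~ exists u : R4, M1 u /\ ~ isFix a b u /\ Fiter a b p u = u) /\
  (J2 < 0 ->
     forall (p : nat), (3 <= p)%nat ->
     ~ exists u : R4, M1 u /\ ~ isFix a b u /\ ~ isPer2 a b u /\ Fiter a b p u = u).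
Proof.
  intros a b.
  assert (Ha : 0 < a) by apply exp_pos.
  assert (Hb : 0 < b) by apply exp_pos.
  split.
  - intros HJ p Hp [u [Hu [Hf Hper]]].
    assert (1 < b).
    { unfold b. rewrite <- exp_0. apply exp_increasing. nra. }
    apply Hf. unfold isFix. apply (core_gt a b u Ha Hb Hu H p); auto. lia.
  - intros HJ p Hp [u [Hu [Hf [H2 Hper]]]].
    assert (b < 1).
    { unfold b. rewrite <- exp_0. apply exp_increasing. nra. }
    pose proof (core_lt a b u Ha Hb Hu H p ltac:(lia) Hper) as E.
    apply H2. split; auto.
Qed.
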